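(* Let $d,d'\ge 1$, let $\{\ket{\Phi_b}\}_{b=1}^{dd'}$ be an orthonormal basis of $\mathbb{C}^{d}\otimes\mathbb{C}^{d'}$, and let $\ket\psi\in\mathbb{C}^{d'}$ be a unit vector. Define the operators on $\mathbb{C}^d$ $$\mu_b=(I\otimes\bra\psi)\,\ket{\Phi_b}\!\bra{\Phi_b}\,(I\otimes\ket\psi),\qquad b=1,\dots,dd'.$$ Then $s_{\boldsymbol\mu}\equiv\dim\operatorname{span}(\{\mu_b\}_{b=1}^{dd'})\ge d$.
   Context: The family $\boldsymbol\mu=(\mu_b)_b$ is a POVM on $\mathbb{C}^d$ (positive operators summing to the identity). The span is the complex linear span inside the space of linear operators on $\mathbb{C}^d$. *)

(* Defs.v *)
(* Complex scalars: an arbitrary numClosedFieldType C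
   (e.g. the complex numbers); conjugation is Num.conj ( ^* ). *)
From HB Require Import structures.
From mathcomp Require Import all_boot all_order all_algebra.
Set Implicit Arguments. Unset Strict Implicit. Unset Printing Implicit Defensive.
Import Order.TTheory GRing.Theory Num.Theory.
Local Open Scope ring_scope.

(* C^d (x) C^d' is modelled as 'cV_(d*d'), the basis vector |i>|j>
   corresponding to index mxvec_index i j. *)

(* (I (x) <psi|) |Phi>  as a column vector in C^d *)
Definition partial_bra (C : numClosedFieldType) (d d' : nat)
  (psi : 'cV[C]_d') (Phi : 'cV[C]_(d * d')) : 'cV[C]_d :=
  \col_(i < d) \sum_(j < d') (psi j 0)^* * Phi (mxvec_index i j) 0.

Definition adjmx (C : numClosedFieldType) m n (A : 'M[C]_(m, n)) : 'M[C]_(n, m) :=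
  (map_mx Num.conj A)^T.

Definition mu_op (C : numClosedFieldType) (d d' : nat)
  (psi : 'cV[C]_d') (Phi : 'cV[C]_(d * d')) : 'M[C]_d :=
  partial_bra psi Phi *m adjmx (partial_bra psi Phi).

(* Main.v *)
Require Import Defs.
From HB Require Import structures.
From mathcomp Require Import all_boot all_order all_algebra.
From mathcomp Require Import ring.
Import Order.TTheory GRing.Theory Num.Theory.
Local Open Scope ring_scope.

Lemma mxvec_index_eq (m n : nat) (i i' : 'I_m) (j j' : 'I_n) :
  (mxvec_index i j == mxvec_index i' j') = (i == i') && (j == j').
Proof.
rewrite /mxvec_index (inj_eq (@cast_ord_inj _ _ _)) (inj_eq (@enum_rank_inj _)).
by rewrite xpair_eqE.
Qed.

Lemma completeness (C : numClosedFieldType) (n : nat)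
  (Phi : 'I_n -> 'cV[C]_n) :
  (forall b b' : 'I_n, \sum_(k < n) (Phi b k 0)^* * Phi b' k 0 = (b == b')%:R) ->
  forall k k' : 'I_n, \sum_(b < n) Phi b k 0 * (Phi b k' 0)^* = (k == k')%:R.
Proof.
move=> H k k'.
pose U := \matrix_(k, b) Phi b k 0.
pose A := \matrix_(b, k) (Phi b k 0)^*.
have AU : A *m U = 1%:M.
  apply/matrixP=> b b'; rewrite !mxE -H; apply: eq_bigr => l _; by rewrite !mxE.
have /matrixP /(_ k k') := mulmx1C AU.
rewrite !mxE => <-; apply: eq_bigr => l _; by rewrite !mxE.
Qed.

Theorem lemma1 (C : numClosedFieldType) (d d' : nat)
  (Phi : 'I_(d * d') -> 'cV[C]_(d * d')) (psi : 'cV[C]_d') :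
  (0 < d)%N -> (0 < d')%N ->
  (forall b b' : 'I_(d * d'),
      \sum_(k < d * d') (Phi b k 0)^* * Phi b' k 0 = (b == b')%:R) ->
  \sum_(j < d') (psi j 0)^* * psi j 0 = 1 ->
  (d <= \dim (span [seq mu_op psi (Phi b) | b <- enum 'I_(d * d')]))%N.
Proof.
move=> _ _ Horth Hpsi.
have Hcomp := @completeness C _ Phi Horth.
pose v b := partial_bra psi (Phi b).
have Hid : forall i i' : 'I_d,
    \sum_(b < d * d') v b i 0 * (v b i' 0)^* = (i == i')%:R.
  move=> i i'.
  have E : forall b, v b i 0 * (v b i' 0)^* =
     \sum_(j < d') \sum_(j' < d') ((psi j 0)^* * psi j' 0 *
        (Phi b (mxvec_index i j) 0 * (Phi b (mxvec_index i' j') 0)^*)).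
    move=> b; rewrite /v /partial_bra !mxE rmorph_sum mulr_suml.
    apply: eq_bigr => j _; rewrite mulr_sumr; apply: eq_bigr => j' _.
    rewrite rmorphM /= conjCK; ring.
  under eq_bigr do rewrite E.
  rewrite exchange_big /=.
  under eq_bigr do rewrite exchange_big /=.
  under eq_bigr do under eq_bigr do rewrite -mulr_sumr Hcomp mxvec_index_eq.
  have [ii'|neq] := boolP (i == i'); rewrite ?ii'.
    transitivity (\sum_(j < d') (psi j 0)^* * psi j 0); last by rewrite Hpsi.
    apply: eq_bigr => j _.
    rewrite (bigD1 j) // big1 =>[|j' /andP[_ nj]]; last by rewrite eq_sym (negbTE nj) andbF mulr0.
    by rewrite /= addr0 !eqxx mulr1.
  by rewrite big1 // => j _; rewrite big1 // => j' _; rewrite mulr0.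
have muv : forall b, mu_op psi (Phi b) = v b *m adjmx (v b) by [].
clearbody v.
pose R := \matrix_(b, i) (v b i 0)^* : 'M[C]_(d * d', d).
pose Vc := \matrix_(i, b) v b i 0 : 'M[C]_(d, d * d').
have VR : Vc *m R = 1%:M.
  apply/matrixP=> i i'; rewrite !mxE -Hid; apply: eq_bigr => b _; by rewrite !mxE.
have hR : row_full R.
  rewrite /row_full eqn_leq rank_leq_col /=.
  by rewrite -{1}(mxrank1 C d) -VR mxrankM_maxr.
pose f := fullrankfun hR.
pose B := invmx (rowsub f R).
have RB : rowsub f R *m B = 1%:M by rewrite mulmxV // fullrowsub_unit.
have Hdual : forall i j : 'I_d,
    \sum_(l < d) (v (f i) l 0)^* * B l j = (i == j)%:R.
  move=> i j; have /matrixP /(_ i j) := RB; rewrite !mxE => <-.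
  by apply: eq_bigr => l _; rewrite !mxE.
pose X := mktuple (fun i : 'I_d => mu_op psi (Phi (f i))).
have freeX : free X.
  apply/freeP => k Hk j.
  have Ha : forall a : 'I_d, k j * v (f j) a 0 = 0.
    move=> a.
    have /matrixP /(_ a 0) := congr1 (fun M => M *m col j B) Hk.
    rewrite mul0mx mxE [RHS]mxE => <-.
    under [RHS]eq_bigr do rewrite summxE mulr_suml.
    rewrite exchange_big /=.
    rewrite (bigD1 j) //= [X in _ = _ + X]big1 ?addr0.
      transitivity (k j * v (f j) a 0 * \sum_(l < d) (v (f j) l 0)^* * B l j).
        by rewrite Hdual eqxx mulr1.
      rewrite mulr_sumr; apply: eq_bigr => l _.
      rewrite nth_mktuple muv !mxE big_ord1 !mxE; ring.
    move=> i nij.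
    transitivity (k i * v (f i) a 0 * \sum_(l < d) (v (f i) l 0)^* * B l j); last first.
      by rewrite Hdual (negbTE nij) mulr0.
    rewrite mulr_sumr; apply: eq_bigr => l _.
    rewrite nth_mktuple muv !mxE big_ord1 !mxE; ring.
  have [//|nz] := eqVneq (k j) 0.
  have v0 : forall a, v (f j) a 0 = 0.
    by move=> a; have /eqP := Ha a; rewrite mulf_eq0 (negbTE nz) => /eqP.
  have := Hdual j j; rewrite eqxx big1 => [/eqP|l _]; last by rewrite v0 conjC0 mul0r.
  by rewrite eq_sym oner_eq0.
have dX : \dim <<X>> = d by move: freeX; rewrite /free size_tuple => /eqP.
rewrite -{1}dX; apply: dimvS; apply: sub_span => x /mapP [i _ ->].
by apply/mapP; exists (f i); rewrite ?mem_enum.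
Qed.
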